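(* Let $1<\alpha\leq 2$ and $c_\alpha=\frac{\alpha-1}{\alpha}\vee \sqrt{\frac{2-\alpha}{\alpha}}$. Then $1+y+c_\alpha|y|^\alpha>0$ for all $y\in\mathbb R$, and \[ -\log(1+y+c_\alpha |y|^\alpha)\leq \log(1-y +c_\alpha |y|^{\alpha}) \quad \text{for all } y\in \mathbb R. \]
   Context: $a\vee b=\max(a,b)$. *)

(* Defs.v *)
From Stdlib Require Import Reals.
Open Scope R_scope.

(* Real power x^a for x >= 0 and a > 0, with the convention 0^a = 0.
   (Rpower x a = exp (a * ln x) is only meaningful for x > 0.) *)
Definition rpow (x a : R) : R := if Req_EM_T x 0 then 0 else Rpower x a.

Definition c_alpha (alpha : R) : R :=
  Rmax ((alpha - 1) / alpha) (sqrt ((2 - alpha) / alpha)).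

(* Main.v *)
Require Import Defs.
From Stdlib Require Import Reals Lra Psatz.
Open Scope R_scope.

Lemma key (alpha t : R) : 1 < alpha -> alpha <= 2 -> 0 <= t ->
  alpha * t^2 <= 2*(alpha-1) * rpow t alpha + (2-alpha) * (rpow t alpha)^2.
Proof.
  intros h1 h2 ht. unfold rpow. destruct (Req_EM_T t 0) as [->|Hn].
  { simpl. lra. }
  assert (tp : 0 < t) by lra.
  unfold Rpower. set (L := ln t).
  assert (Et : t^2 = exp (2*L)).
  { unfold L. replace (2 * ln t) with (ln t + ln t) by ring. rewrite exp_plus, exp_ln by lra. ring. }
  assert (Eb : (exp (alpha*L))^2 = exp (2*L) * exp (2*alpha*L - 2*L)).
  { rewrite <- exp_plus. replace (2 * L + (2 * alpha * L - 2 * L)) with (alpha*L + alpha*L) by ring.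
    rewrite exp_plus. ring. }
  assert (Ea : exp (alpha*L) = exp (2*L) * exp (alpha*L - 2*L)).
  { rewrite <- exp_plus. f_equal. ring. }
  rewrite Et, Eb, Ea.
  pose proof (exp_ineq1_le (alpha*L - 2*L)).
  pose proof (exp_ineq1_le (2*alpha*L - 2*L)).
  pose proof (exp_pos (2*L)) as E.
  set (E2 := exp (2*L)) in *.
  assert (0 <= E2 * (2*(alpha-1)*(exp (alpha * L - 2 * L) - (1 + (alpha*L - 2*L))))).
  { apply Rmult_le_pos; [lra|]. apply Rmult_le_pos; lra. }
  assert (0 <= E2 * ((2-alpha)*(exp (2*alpha * L - 2 * L) - (1 + (2*alpha*L - 2*L))))).
  { apply Rmult_le_pos; [lra|]. apply Rmult_le_pos; lra. }
  nra.
Qed.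

Theorem lemmaA2 (alpha : R) (h1 : 1 < alpha) (h2 : alpha <= 2) :
  (forall y : R, 0 < 1 + y + c_alpha alpha * rpow (Rabs y) alpha) /\
  (forall y : R,
     - ln (1 + y + c_alpha alpha * rpow (Rabs y) alpha)
     <= ln (1 - y + c_alpha alpha * rpow (Rabs y) alpha)).
Proof.
  set (c := c_alpha alpha).
  assert (ca : (alpha - 1)/alpha <= c) by apply Rmax_l.
  assert (cb : sqrt ((2-alpha)/alpha) <= c) by apply Rmax_r.
  assert (q0 : 0 <= (2-alpha)/alpha) by (unfold Rdiv; apply Rmult_le_pos; [lra| left; apply Rinv_0_lt_compat; lra]).
  pose proof (sqrt_pos ((2-alpha)/alpha)).
  pose proof (sqrt_sqrt _ q0) as Hs.
  assert (c1 : 2*(alpha-1) <= 2*c*alpha).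
  { apply Rmult_le_compat_r with (r:=alpha) in ca; [|lra].
    unfold Rdiv in ca. rewrite Rmult_assoc, Rinv_l in ca by lra. lra. }
  assert (c2 : 2-alpha <= c*c*alpha).
  { assert (sqrt ((2-alpha)/alpha) * sqrt ((2-alpha)/alpha) <= c*c) by nra.
    rewrite Hs in H0. apply Rmult_le_compat_r with (r:=alpha) in H0; [|lra].
    unfold Rdiv in H0. rewrite Rmult_assoc, Rinv_l in H0 by lra. lra. }
  assert (pp : forall t, 0 <= rpow t alpha).
  { intro t. unfold rpow. destruct (Req_EM_T t 0); [lra|]. unfold Rpower. left; apply exp_pos. }
  assert (c0 : 0 <= c) by lra.
  assert (M : forall y, y*y <= 2*c*rpow (Rabs y) alpha + c*c*(rpow (Rabs y) alpha)^2).
  { intro y. pose proof (key alpha (Rabs y) h1 h2 (Rabs_pos y)) as K.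
    pose proof (pp (Rabs y)). set (p := rpow (Rabs y) alpha) in *.
    assert (Rabs y ^ 2 = y*y) by (unfold Rabs; destruct (Rcase_abs y); simpl; ring).
    assert (0 <= (2*c*alpha - 2*(alpha-1))*p) by (apply Rmult_le_pos; lra).
    assert (0 <= (c*c*alpha - (2-alpha))*p^2) by (apply Rmult_le_pos; nra).
    assert (alpha * (y*y) <= alpha * (2*c*p + c*c*p^2)) by nra.
    apply Rmult_le_reg_l with alpha; lra. }
  assert (P : forall y, 0 < 1 + y + c * rpow (Rabs y) alpha).
  { intro y. pose proof (M y). pose proof (pp (Rabs y)).
    set (p := rpow (Rabs y) alpha) in *.
    assert (0 <= c*p) by (apply Rmult_le_pos; lra).
    destruct (Rle_lt_dec 0 y); [lra|]. nra. }
  split; [exact P|].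
  intro y. pose proof (P y) as A. pose proof (P (-y)) as B. rewrite Rabs_Ropp in B.
  pose proof (M y).
  set (p := rpow (Rabs y) alpha) in *.
  assert (1 <= (1 + y + c*p) * (1 - y + c*p)) by nra.
  rewrite <- (Rplus_0_l (ln (1 - y + c * p))).
  apply Rplus_le_reg_l with (ln (1 + y + c*p)).
  replace (ln (1 + y + c * p) + - ln (1 + y + c * p)) with 0 by ring.
  rewrite Rplus_0_l, <- ln_mult by lra. rewrite <- ln_1.
  destruct H1 as [H1|H1]; [left; apply ln_increasing; lra | rewrite <- H1; lra].
Qed.
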